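(* Let $n \ge 2$ and let $K$ be a compact convex subset of $\mathbb{R}^n$ such that, for every unit vector $u$, the projection $\Xi_u$ contains a translate of $K_u$. Then there exists $x \in \mathbb{R}^n$ such that $$K + x \subseteq D \subseteq \tfrac{n}{n-1}\,\Xi.$$
   Context: $e_1,\dots,e_n$ are the standard basis vectors of $\mathbb{R}^n$ and $o$ is the origin. $\Xi$ is the simplex $\mathrm{conv}\{o, e_1, \dots, e_n\}$. $D$ is the convex hull of $\Xi$ and the point $p = (\tfrac{1}{n-1}, \dots, \tfrac{1}{n-1})$; equivalently $D = \{x \in \mathbb{R}^n : x_i \ge 0 \text{ for all } i,\ \sum_{j \ne i} x_j \le 1 \text{ for all } i\}$. For a set $S$ and unit vector $u$, $S_u$ denotes the orthogonal projection of $S$ onto $u^\perp$; ''$A$ contains a translate of $B$'' means $B + w \subseteq A$ for some vector $w$. *)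

(* Defs.v *)
From Stdlib Require Import Reals List.
From mathcomp Require Import all_boot.

Set Implicit Arguments.
Unset Strict Implicit.
Unset Printing Implicit Defensive.

Local Open Scope R_scope.

Definition vec (n : nat) := 'I_n -> R.

Definition rsum (m : nat) (F : 'I_m -> R) : R := \big[Rplus/0]_(i < m) F i.

Definition dot (n : nat) (u v : vec n) : R := rsum (fun i => u i * v i).

Definition vadd (n : nat) (x y : vec n) : vec n := fun i => x i + y i.
Definition vscale (n : nat) (c : R) (x : vec n) : vec n := fun i => c * x i.

Definition unit_vec (n : nat) (u : vec n) : Prop := dot u u = 1.

Definition origin (n : nat) : vec n := fun _ => 0.
Definition basis (n : nat) (k : 'I_n) : vec n :=
  fun i => if i == k then 1 else 0.

Definition conv_fam (n m : nat) (P : 'I_m -> vec n) (x : vec n) : Prop :=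
  exists lam : 'I_m -> R,
    (forall j, 0 <= lam j) /\ rsum lam = 1 /\
    forall i, x i = rsum (fun j => lam j * P j i).

(* the points o, e_1, ..., e_n indexed by 'I_n.+1 (index 0 is o) *)
Definition simplex_pts (n : nat) (j : 'I_n.+1) : vec n :=
  match unlift ord0 j with
  | None => @origin n
  | Some k => @basis n k
  end.

Definition Xi (n : nat) (x : vec n) : Prop := conv_fam (@simplex_pts n) x.

(* D = conv(Xi ∪ {p}), given by its inequality description *)
Definition Dset (n : nat) (x : vec n) : Prop :=
  (forall i, 0 <= x i) /\
  (forall i, rsum (fun j => if j == i then 0 else x j) <= 1).

Definition dilate (n : nat) (c : R) (S : vec n -> Prop) (y : vec n) : Prop :=
  exists x, S x /\ y = vscale c x.

Definition translate (n : nat) (S : vec n -> Prop) (w : vec n) (y : vec n) : Prop :=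
  exists x, S x /\ y = vadd x w.

Definition set_sub (n : nat) (A B : vec n -> Prop) : Prop := forall x, A x -> B x.

Definition contains_translate (n : nat) (A B : vec n -> Prop) : Prop :=
  exists w, set_sub (translate B w) A.

Definition proj_pt (n : nat) (u x : vec n) : vec n :=
  fun i => x i - dot x u * u i.
Definition proj_set (n : nat) (S : vec n -> Prop) (u : vec n) (y : vec n) : Prop :=
  exists x, S x /\ y = proj_pt u x.

Definition convex (n : nat) (K : vec n -> Prop) : Prop :=
  forall x y t, K x -> K y -> 0 <= t <= 1 ->
    K (vadd (vscale t x) (vscale (1 - t) y)).

Definition dist2 (n : nat) (x y : vec n) : R := rsum (fun i => (x i - y i) * (x i - y i)).
Definition open_set (n : nat) (U : vec n -> Prop) : Prop :=
  forall x, U x -> exists eps, 0 < eps /\ forall y, dist2 x y < eps * eps -> U y.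

Definition compact_set (n : nat) (K : vec n -> Prop) : Prop :=
  forall (I : Type) (U : I -> vec n -> Prop),
    (forall i, open_set (U i)) ->
    (forall x, K x -> exists i, U i x) ->
    exists l : list I, forall x, K x -> exists i, List.In i l /\ U i x.

(* Main.v *)
Require Import Defs.
From HB Require Import structures.
From Stdlib Require Import Reals Lra FunctionalExtensionality Classical.
From mathcomp Require Import all_boot.

Set Implicit Arguments.
Unset Strict Implicit.
Local Open Scope R_scope.

Lemma RplusA : associative Rplus. Proof. by move=> *; rewrite Rplus_assoc. Qed.
HB.instance Definition _ := Monoid.isComLaw.Build R 0 Rplus RplusA Rplus_comm Rplus_0_l.

Lemma rsum_le m (F G : 'I_m -> R) : (forall i, F i <= G i) -> rsum F <= rsum G.
Proof.
move=> H; rewrite /rsum; apply: (big_ind2 (fun a b => a <= b)); first lra.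
  by move=> *; lra.
by move=> i _; apply: H.
Qed.

Lemma rsum_ge0 m (F : 'I_m -> R) : (forall i, 0 <= F i) -> 0 <= rsum F.
Proof.
move=> H; rewrite /rsum; apply: (big_ind (fun a => 0 <= a)); first lra.
  by move=> *; lra.
by move=> i _; apply: H.
Qed.

Lemma rsumD m (F G : 'I_m -> R) : rsum (fun i => F i + G i) = rsum F + rsum G.
Proof. by rewrite /rsum big_split. Qed.

Lemma rsumN m (F : 'I_m -> R) : rsum (fun i => - F i) = - rsum F.
Proof.
rewrite /rsum; symmetry; apply: (big_morph Ropp); last by rewrite Ropp_0.
by move=> a b; rewrite Ropp_plus_distr.
Qed.

Lemma rsumZ m c (F : 'I_m -> R) : rsum (fun i => c * F i) = c * rsum F.
Proof.
rewrite /rsum; symmetry; apply: (big_morph (fun s => c * s)); last by rewrite Rmult_0_r.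
by move=> a b; rewrite Rmult_plus_distr_l.
Qed.

Lemma rsum_const m c : rsum (fun _ : 'I_m => c) = INR m * c.
Proof.
rewrite /rsum big_const_ord; elim: m => [|m IH] /=; first lra.
rewrite IH; destruct m; simpl; lra.
Qed.

Lemma rsum_delta m (i : 'I_m) (F : 'I_m -> R) :
  rsum (fun j => if j == i then F j else 0) = F i.
Proof.
rewrite /rsum (bigD1 i) //= eqxx big1; first lra.
by move=> j /negbTE ->.
Qed.

Lemma rsum_out m (i : 'I_m) (F : 'I_m -> R) :
  rsum (fun j => if j == i then 0 else F j) = rsum F - F i.
Proof.
have := rsumD (fun j => if j == i then 0 else F j) (fun j => if j == i then F j else 0).
rewrite rsum_delta.
have -> : (fun j => (if j == i then 0 else F j) + (if j == i then F j else 0)) = F.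
  by apply: functional_extensionality => j; case: (j == i); lra.
move=> ->; lra.
Qed.

Lemma rsumS m (G : 'I_m.+1 -> R) : rsum G = G ord0 + rsum (fun k : 'I_m => G (lift ord0 k)).
Proof. by rewrite /rsum big_ord_recl. Qed.

Lemma sp0 n : @simplex_pts n ord0 = @origin n.
Proof. by rewrite /simplex_pts unlift_none. Qed.

Lemma spS n k : @simplex_pts n (lift ord0 k) = basis k.
Proof. by rewrite /simplex_pts liftK. Qed.

Lemma Xi_coord n (lam : 'I_n.+1 -> R) i :
  rsum (fun j => lam j * simplex_pts j i) = lam (lift ord0 i).
Proof.
rewrite rsumS sp0 /origin Rmult_0_r Rplus_0_l.
rewrite -[RHS](rsum_delta i (fun k => lam (lift ord0 k))).
congr rsum; apply: functional_extensionality => k.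
rewrite spS /basis eq_sym; case: (k == i); lra.
Qed.

Lemma Xi_char n (z : vec n) : Xi z <-> (forall j, 0 <= z j) /\ rsum z <= 1.
Proof.
split.
  move=> [lam [H0 [H1 H2]]].
  have Ez : z = fun k => lam (lift ord0 k).
    by apply: functional_extensionality => k; rewrite H2 Xi_coord.
  rewrite Ez; split; first by move=> j; apply: H0.
  move: H1; rewrite rsumS => H1; have := H0 ord0; simpl in H1; lra.
move=> [H0 H1].
exists (fun l => match unlift ord0 l with None => 1 - rsum z | Some k => z k end).
split; [|split].
- by move=> l; case: (unlift ord0 l) => [k|] //; lra.
- rewrite rsumS unlift_none.
  have -> : (fun k => match unlift ord0 (lift ord0 k) with
                   | Some k0 => z k0 | None => 1 - rsum z end) = z.
    by apply: functional_extensionality => k; rewrite liftK.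
  lra.
- by move=> i; rewrite Xi_coord liftK.
Qed.

Lemma basis_unit n (i : 'I_n) : unit_vec (basis i).
Proof.
rewrite /unit_vec /dot -[RHS](rsum_delta i (fun _ => 1)).
congr rsum; apply: functional_extensionality => j.
rewrite /basis; case: (j == i); lra.
Qed.

Lemma dot_basis n (k : vec n) i : dot k (basis i) = k i.
Proof.
rewrite /dot -[RHS](rsum_delta i k).
congr rsum; apply: functional_extensionality => j.
rewrite /basis; case: (j == i); lra.
Qed.

Lemma proj_basis_eq n (k : vec n) i j : proj_pt (basis i) k j = if j == i then 0 else k j.
Proof.
rewrite /proj_pt dot_basis /basis; case: eqP => [->|_]; lra.
Qed.

Lemma proj_basis n (i : 'I_n) (K : vec n -> Prop) w :
  set_sub (translate (proj_set K (basis i)) w) (proj_set (@Xi n) (basis i)) ->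
  forall k, K k -> (forall j, j != i -> 0 <= k j + w j) /\
    rsum (fun j => if j == i then 0 else k j + w j) <= 1.
Proof.
move=> H k Kk.
have [z [Xz Ez]] : proj_set (@Xi n) (basis i) (vadd (proj_pt (basis i) k) w).
  apply: H; exists (proj_pt (basis i) k); split => //; by exists k.
have Ej : forall j, j != i -> k j + w j = z j.
  move=> j ji; have := f_equal (fun f => f j) Ez; rewrite /vadd /= !proj_basis_eq.
  by rewrite (negbTE ji); lra.
move/Xi_char: Xz => [Z0 Z1]; split.
  by move=> j ji; rewrite Ej //.
apply: Rle_trans Z1; apply: rsum_le => j.
case: eqP => [_|/eqP ji]; first by apply: Z0.
rewrite Ej //; lra.
Qed.

Lemma other_index n (Hn : (2 <= n)%nat) (j : 'I_n) : exists i : 'I_n, i != j.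
Proof.
have h0 : (0 < n)%nat by apply: leq_trans Hn.
have h1 : (1 < n)%nat by [].
case: (eqVneq (Ordinal h0) j) => [e|ne]; last by exists (Ordinal h0).
exists (Ordinal h1); apply/eqP => e'; move: e; rewrite -e' => /(f_equal val) //.
Qed.

Lemma D_sub n (Hn : (2 <= n)%nat) :
  set_sub (@Dset n) (dilate (Rdiv (INR n) (Rminus (INR n) 1)) (@Xi n)).
Proof.
move=> x [X0 X1].
have Hn2 : 2 <= INR n by apply: (le_INR 2); apply/leP.
set S := rsum x.
have HS : (INR n - 1) * S <= INR n.
  have := rsum_le (fun i => X1 i); rewrite rsum_const.
  have -> : (fun i => rsum (fun j => if j == i then 0 else x j)) = (fun i => S + - x i).
    by apply: functional_extensionality => i; rewrite rsum_out.
  rewrite rsumD rsumN rsum_const -/S; lra.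
exists (fun j => (INR n - 1) / INR n * x j); split.
  apply/Xi_char; split.
    move=> j; apply: Rmult_le_pos; last by [].
    apply: Rle_mult_inv_pos; lra.
  rewrite rsumZ -/S.
  apply: (Rmult_le_reg_l (INR n)); first lra.
  field_simplify; lra.
apply: functional_extensionality => j; rewrite /vscale; field; lra.
Qed.

Theorem theorem4p1 (n : nat) (Hn : (2 <= n)%nat) (K : vec n -> Prop) :
  compact_set K -> convex K ->
  (forall u : vec n, unit_vec u ->
     contains_translate (proj_set (@Xi n) u) (proj_set K u)) ->
  exists x : vec n,
    set_sub (translate K x) (@Dset n) /\
    set_sub (@Dset n) (dilate (Rdiv (INR n) (Rminus (INR n) 1)) (@Xi n)).
Proof.
move=> _ _ H.
have HP : forall i : 'I_n, exists w, forall k, K k -> (forall j, j != i -> 0 <= k j + w j) /\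
    rsum (fun j => if j == i then 0 else k j + w j) <= 1.
  move=> i; have [w Hw] := H _ (basis_unit i); exists w; exact: proj_basis Hw.
case: (classic (exists k, K k)) => [[k0 Kk0]|NK]; last first.
  exists (@origin n); split; last exact: D_sub.
  by move=> y [k [Kk _]]; case: NK; exists k.
pose E (j : 'I_n) (r : R) := exists k, K k /\ r = - k j.
have B : forall j, {M | is_lub (E j) M}.
  move=> j; apply: completeness; last by exists (- k0 j); exists k0.
  have [i ij] := other_index Hn j; have [w Hw] := HP i.
  exists (w j) => r [k [Kk ->]]; have [W0 _] := Hw k Kk.
  have := W0 j; rewrite eq_sym => /(_ ij); lra.
exists (fun j => proj1_sig (B j)); split; last exact: D_sub.
have Lo : forall k j, K k -> - k j <= proj1_sig (B j).
  move=> k j Kk; case: (B j) => M [HM _] /=; apply: HM; by exists k.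
move=> y [k [Kk ->]]; split.
  by move=> j; rewrite /vadd; have := Lo k j Kk; lra.
move=> i; have [w Hw] := HP i; have [W0 W1] := Hw k Kk.
apply: Rle_trans W1; apply: rsum_le => j; rewrite /vadd.
case: eqP => [_|/eqP ji]; first lra.
apply: Rplus_le_compat_l.
case: (B j) => M [_ HM] /=; apply: HM => r [k' [Kk' ->]].
have [W0' _] := Hw k' Kk'; have := W0' j ji; lra.
Qed.
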